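(* Let $G$ be a map graph with a corresponding planar bipartite graph $B$, let $\mathcal{D}=(T,\beta_{\mathcal{D}})$ be a nice tree decomposition of $B$, and let $\mathcal{D}'$ be derived from $\mathcal{D}$ as described in the context. Let $t$ be a node of $T$ labelled join in $\mathcal{D}$, with children $t_1$ and $t_2$. Then $\mathsf{Original}(t)=\mathsf{Original}(t_1)=\mathsf{Original}(t_2)$, $\mathsf{Cliques}(t)=\mathsf{Cliques}(t_1)=\mathsf{Cliques}(t_2)$, $\mathsf{Fake}(t_1)\cap\mathsf{Fake}(t_2)=\emptyset$, and $\mathsf{Fake}(t)=\mathsf{Fake}(t_1)\cup\mathsf{Fake}(t_2)$.
   Context: All graphs are finite and simple. For a bipartite graph $B$ with bipartition $V(B)=W\uplus U$, the half-square of $B$ is the graph on $W$ in which two vertices are adjacent iff they are at distance exactly $2$ in $B$. A graph $G$ is a map graph iff it is the half-square of some planar bipartite graph $B$; such $B$ (with $W=V(G)$) is a corresponding planar bipartite graph, and $S(G)=U$ is the set of special vertices; for $s\in S(G)$, $N_B(s)$ is a clique of $G$ called a special clique. A tree decomposition $(T,\beta)$: rooted tree $T$, bags covering all vertices and edges, and for each vertex the nodes containing it induce a connected subtree. $\gamma_{\mathcal{D}}(t)$ is the union of bags of $t$ and its descendants. A nice tree decomposition has empty root bag and each node is a leaf (empty bag), introduce$(w)$, forget$(w)$ (one child, bag obtained by adding/removing $w$), or join (two children whose bags equal $\beta(t)$). The derived decomposition $\mathcal{D}'=(T,\beta_{\mathcal{D}'})$ has $\beta_{\mathcal{D}'}(t)=(\beta_{\mathcal{D}}(t)\cap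 V(G))\cup\bigcup_{s\in\beta_{\mathcal{D}}(t)\cap S(G)}(N_B(s)\cap\gamma_{\mathcal{D}}(t))$. Define $\mathsf{Original}(t)=\beta_{\mathcal{D}}(t)\cap\beta_{\mathcal{D}'}(t)$, $\mathsf{Fake}(t)=\beta_{\mathcal{D}'}(t)\setminus\beta_{\mathcal{D}}(t)$, and $\mathsf{Cliques}(t)=\{N_B(s): s\in S(G)\cap\beta_{\mathcal{D}}(t)\}$. *)

(* Defs.v *)
From mathcomp Require Import all_boot all_fingroup.
Set Implicit Arguments. Unset Strict Implicit. Unset Printing Implicit Defensive.

Section Graphs.
Variable V : finType.

Definition simple_graph (e : rel V) : Prop :=
  (forall u v, e u v = e v u) /\ (forall v, ~~ e v v).

Definition dart (e : rel V) := {d : V * V | e d.1 d.2}.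

(* reversal of a dart (well-defined when e is symmetric) *)
Definition dart_rev (e : rel V) (d : dart e) : dart e := insubd d ((val d).2, (val d).1).

Definition n_components (e : rel V) : nat := n_comp e predT.

Definition n_isolated (e : rel V) : nat := #|[set v | ~~ [exists u, e v u]]|.

Definition rotation_system (e : rel V) (sigma : {perm dart e}) : Prop :=
  (forall d, (val (sigma d)).1 = (val d).1) /\
  (forall d d', (val d).1 = (val d').1 -> exists k, (sigma ^+ k)%g d = d').

(* faces of the embedding given by sigma: orbits of d |-> sigma (rev d) *)
Definition n_faces (e : rel V) (sigma : {perm dart e}) : nat :=
  fcard (fun d => sigma (dart_rev d)) predT.

(* Planarity (Heffter--Edmonds--Euler): the graph admits a rotation system of genus 0,
   i.e. V - E + F = 2 * (#components with an edge) + (#isolated vertices),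
   written without subtraction using #darts = 2E. *)
Definition planar (e : rel V) : Prop :=
  exists sigma : {perm dart e}, rotation_system sigma /\
    2 * #|V| + 2 * n_faces sigma + 2 * n_isolated e
    = 4 * n_components e + #|{: dart e}|.

Definition bipartite_wrt (e : rel V) (W : {set V}) : Prop :=
  forall u v, e u v -> (u \in W) != (v \in W).

Definition half_square (e : rel V) (W : {set V}) : rel V :=
  fun x y => [&& x \in W, y \in W, x != y & [exists s, e x s && e s y]].

Definition nbhd (e : rel V) (v : V) : {set V} := [set x | e v x].

End Graphs.

Section TreeDec.
Variables (N V : finType).
Definition rooted_tree (par : N -> N) (r : N) : Prop :=
  par r = r /\ forall t, fconnect par t r.

Definition children (par : N -> N) (r t : N) : {set N} :=
  [set c | (c != r) && (par c == t)].

Definition bag_adj (par : N -> N) (bag : N -> {set V}) (v : V) : rel N :=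
  fun a b => [&& v \in bag a, v \in bag b & (par a == b) || (par b == a)].

Definition tree_decomposition (e : rel V) (par : N -> N) (r : N) (bag : N -> {set V}) : Prop :=
  rooted_tree par r /\
  (forall v, exists t, v \in bag t) /\
  (forall u v, e u v -> exists t, (u \in bag t) && (v \in bag t)) /\
  (forall v t1 t2, v \in bag t1 -> v \in bag t2 -> connect (bag_adj par bag v) t1 t2).

Definition is_leaf par r (bag : N -> {set V}) t : Prop :=
  children par r t = set0 /\ bag t = set0.
Definition is_introduce par r (bag : N -> {set V}) t (w : V) : Prop :=
  exists c, children par r t = [set c] /\ w \notin bag c /\ bag t = w |: bag c.
Definition is_forget par r (bag : N -> {set V}) t (w : V) : Prop :=
  exists c, children par r t = [set c] /\ w \in bag c /\ bag t = bag c :\ w.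
Definition is_join par r (bag : N -> {set V}) t t1 t2 : Prop :=
  t1 != t2 /\ children par r t = [set t1; t2] /\ bag t1 = bag t /\ bag t2 = bag t.

Definition nice_tree_decomposition (e : rel V) par r (bag : N -> {set V}) : Prop :=
  tree_decomposition e par r bag /\ bag r = set0 /\
  forall t, is_leaf par r bag t \/ (exists w, is_introduce par r bag t w)
            \/ (exists w, is_forget par r bag t w) \/ (exists t1 t2, is_join par r bag t t1 t2).

Definition gamma (par : N -> N) (bag : N -> {set V}) (t : N) : {set V} :=
  \bigcup_(d | fconnect par d t) bag d.

(* derived decomposition; W = V(G), S(G) = ~: W *)
Definition derived_bag (e : rel V) (W : {set V}) par (bag : N -> {set V}) (t : N) : {set V} :=
  (bag t :&: W) :|: \bigcup_(s in bag t :&: ~: W) (nbhd e s :&: gamma par bag t).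

Definition Original e W par (bag : N -> {set V}) t : {set V} :=
  bag t :&: derived_bag e W par bag t.
Definition Fake e W par (bag : N -> {set V}) t : {set V} :=
  derived_bag e W par bag t :\: bag t.
Definition Cliques e (W : {set V}) (bag : N -> {set V}) t : {set {set V}} :=
  [set nbhd e s | s in bag t :&: ~: W].
End TreeDec.

(* Main.v *)
Require Import Defs.
From mathcomp Require Import all_boot all_fingroup.
From mathcomp Require Import zify.
Set Implicit Arguments. Unset Strict Implicit. Unset Printing Implicit Defensive.

Section Aux.
Variables (N : finType) (par : N -> N) (r : N).
Hypothesis Hr : par r = r.
Hypothesis Hreach : forall t, fconnect par t r.

Lemma iter_fixp x n : par x = x -> iter n par x = x.
Proof. by move=> H; elim: n => //= n ->. Qed.

Lemma iter_mulp k x m : iter k par x = x -> iter (m * k) par x = x.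
Proof. move=> H; elim: m => // m IH; by rewrite mulSn iterD IH H. Qed.

Lemma ex_iter x y : fconnect par x y -> exists n, iter n par x = y.
Proof. by move=> H; exists (findex par x y); apply: iter_findex. Qed.

Lemma antisymp x y : fconnect par x y -> fconnect par y x -> x = y.
Proof.
move=> /ex_iter [a Ha] /ex_iter [b Hb].
have Hc : iter (b + a) par x = x by rewrite iterD Ha Hb.
case: (posnP (b + a)) => Hab.
  have a0 : a = 0 by lia.
  by rewrite -Ha a0.
have [m Hm] := ex_iter (Hreach x).
have := iter_mulp m Hc.
rewrite -(subnK (leq_pmulr m Hab)) iterD Hm iter_fixp // => xr.
by rewrite -Ha -xr iter_fixp.
Qed.

Lemma desc_step d c : fconnect par d c -> d != c -> fconnect par (par d) c.
Proof.
move=> /ex_iter [[|n] Hn] ne; first by move: ne; rewrite /= in Hn; rewrite Hn eqxx.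
rewrite iterSr in Hn; rewrite -Hn; exact: fconnect_iter.
Qed.

Lemma desc_parp d c : fconnect par d c -> fconnect par d (par c).
Proof. by move=> H; apply: connect_trans H (fconnect1 _ _). Qed.

Lemma crossp (V : finType) (bag : N -> {set V}) x (S : pred N) d1 d2 :
  connect (bag_adj par bag x) d1 d2 -> S d1 -> ~~ S d2 ->
  exists a b, [/\ bag_adj par bag x a b, S a & ~~ S b].
Proof.
case/connectP => p; elim: p d1 => [|c p IH] d1 /=.
  by move=> _ -> H1 H2; rewrite H1 in H2.
move=> /andP[e pth] lst Sd1 nS2.
case Sc: (S c); first exact: IH pth lst Sc nS2.
by exists d1, c; rewrite Sc.
Qed.

Variables (t t1 t2 : N).
Hypothesis Hch : children par r t = [set t1; t2].
Hypothesis Hne : t1 != t2.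

Lemma child1 : t1 != r /\ par t1 = t.
Proof.
have : t1 \in children par r t by rewrite Hch !inE eqxx.
by rewrite inE => /andP[-> /eqP ->].
Qed.
Lemma child2 : t2 != r /\ par t2 = t.
Proof.
have : t2 \in children par r t by rewrite Hch !inE eqxx orbT.
by rewrite inE => /andP[-> /eqP ->].
Qed.

Lemma desc_split d : fconnect par d t ->
  [|| d == t, fconnect par d t1 | fconnect par d t2].
Proof.
move=> /ex_iter [n]; elim: n d => [|n IH] d Hn.
  by rewrite /= in Hn; rewrite Hn eqxx.
rewrite iterSr in Hn; case/or3P: (IH _ Hn) => [/eqP pd | h | h].
- case: (eqVneq d r) => [dr|dr].
    by rewrite -pd dr Hr eqxx.
  have : d \in children par r t by rewrite inE dr pd eqxx.
  rewrite Hch !inE => /orP[]/eqP->.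
    by apply/or3P; constructor 2; exact: connect0.
  by apply/or3P; constructor 3; exact: connect0.
- by apply/or3P; constructor 2; exact: connect_trans (fconnect1 _ d) h.
- by apply/or3P; constructor 3; exact: connect_trans (fconnect1 _ d) h.
Qed.

Lemma no_reach u v : u != v -> par u = t -> par v = t -> v != r ->
  fconnect par u v -> False.
Proof.
move=> uv pu pv vr H.
have H1 := desc_step H uv; rewrite pu in H1.
have H2 : fconnect par v t by rewrite -pv; exact: fconnect1.
have tv := antisymp H1 H2.
have [n Hn] := ex_iter (Hreach v).
rewrite iter_fixp in Hn; last by rewrite pv tv.
by rewrite Hn eqxx in vr.
Qed.

Lemma not_both d : fconnect par d t1 -> fconnect par d t2 -> False.
Proof.
move=> /ex_iter [a Ha] /ex_iter [b Hb].
have [c1 p1] := child1; have [c2 p2] := child2.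
case: (leqP a b) => ab.
  apply: (no_reach Hne p1 p2 c2).
  rewrite -Hb -(subnK ab) iterD Ha; exact: fconnect_iter.
apply: (no_reach _ p2 p1 c1); first by rewrite eq_sym.
rewrite -Ha -(subnK (ltnW ab)) iterD Hb; exact: fconnect_iter.
Qed.

Variable V : finType.
Variable bag : N -> {set V}.
Hypothesis Hconn : forall v t1 t2, v \in bag t1 -> v \in bag t2 ->
  connect (bag_adj par bag v) t1 t2.

Lemma G1 x : (x \in gamma par bag t) =
  [|| x \in bag t, x \in gamma par bag t1 | x \in gamma par bag t2].
Proof.
have [_ p1] := child1; have [_ p2] := child2.
apply/idP/idP.
  case/bigcupP => d Hd xd.
  case/or3P: (desc_split Hd) => [/eqP dt | h | h].
  - by rewrite -dt xd.
  - by apply/or3P; constructor 2; apply/bigcupP; exists d.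
  - by apply/or3P; constructor 3; apply/bigcupP; exists d.
case/or3P => [h | /bigcupP [d Hd xd] | /bigcupP [d Hd xd]];
  apply/bigcupP.
- by exists t => //; exact: connect0.
- by exists d => //; rewrite -p1; exact: desc_parp.
- by exists d => //; rewrite -p2; exact: desc_parp.
Qed.

Lemma G2 x : x \in gamma par bag t1 -> x \in gamma par bag t2 -> x \in bag t1.
Proof.
case/bigcupP => d1 H1 x1; case/bigcupP => d2 H2 x2.
have nS : ~~ fconnect par d2 t1 by apply/negP => h; exact: (not_both h H2).
have [a [b [/and3P [xa xb hab] Sa nSb]]] :=
  crossp (S := fun d => fconnect par d t1) (Hconn x1 x2) H1 nS.
case/orP: hab => /eqP pab.
  case: (eqVneq a t1) => [<- // | ne].
  by have := desc_step Sa ne; rewrite pab (negbTE nSb).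
have : fconnect par b t1 by apply: connect_trans (fconnect1 _ b) _; rewrite pab.
by rewrite (negbTE nSb).
Qed.
End Aux.

Lemma OriginalE (V N : finType) (B : rel V) W par (bag : N -> {set V}) u :
  bipartite_wrt B W -> Original B W par bag u = bag u :&: W.
Proof.
move=> Hb; apply/setP => x; rewrite /Original /derived_bag !inE.
case: (x \in bag u) => //=; case xW: (x \in W) => //=.
apply/negP => /bigcupP [s]; rewrite !inE => /andP[_ sW] /andP[].
move=> /Hb; by rewrite xW (negbTE sW).
Qed.

Lemma FakeE (V N : finType) (B : rel V) W par (bag : N -> {set V}) u x :
  (x \in Fake B W par bag u) = [&& x \notin bag u,
     [exists s, (s \in bag u :&: ~: W) && B s x] & x \in gamma par bag u].
Proof.
rewrite /Fake /derived_bag !inE; case: (x \in bag u) => //=.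
apply/bigcupP/andP.
  move=> [s Hs]; rewrite !inE => /andP[Bs ->]; split => //.
  by apply/existsP; exists s; rewrite Hs.
move=> [/existsP [s /andP [Hs Bs]] g]; exists s => //.
by rewrite !inE Bs g.
Qed.

Theorem lemma13 (V : finType) (B : rel V) (W : {set V})
  (N : finType) (par : N -> N) (r : N) (bag : N -> {set V}) (t t1 t2 : N) :
  simple_graph B -> bipartite_wrt B W -> planar B ->
  nice_tree_decomposition B par r bag ->
  is_join par r bag t t1 t2 ->
  (Original B W par bag t = Original B W par bag t1 /\
   Original B W par bag t1 = Original B W par bag t2) /\
  (Cliques B W bag t = Cliques B W bag t1 /\
   Cliques B W bag t1 = Cliques B W bag t2) /\
  Fake B W par bag t1 :&: Fake B W par bag t2 = set0 /\
  Fake B W par bag t = Fake B W par bag t1 :|: Fake B W par bag t2.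
Proof.
move=> _ Hbip _ [[[Hr Hreach] [_ [_ Hconn]]] _] [Hne [Hch [Hb1 Hb2]]].
split; first by rewrite !OriginalE // Hb1 Hb2.
split; first by rewrite /Cliques Hb1 Hb2.
split.
  apply/setP => x; rewrite inE FakeE FakeE in_set0 Hb1 Hb2.
  have := G2 Hr Hreach Hch Hne Hconn (x := x); rewrite Hb1.
  case: (x \in bag t); case: (x \in gamma par bag t1); case: (x \in gamma par bag t2) => /= H; rewrite ?andbT ?andbF //; by have := H isT isT.


apply/setP => x; rewrite in_setU !FakeE Hb1 Hb2 (G1 Hr Hch).
by case: (x \in bag t); case: (x \in gamma par bag t1); case: (x \in gamma par bag t2); case: [exists s, _]; rewrite /= ?andbT ?andbF ?orbF.
Qed.
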